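(* Let $\nu\in\{1,2\}$ and $\rho\in\{1,2\}$ with $\rho\neq\nu$. Let $q\equiv 7\pmod 8$ and $r\equiv s\equiv 3\pmod 8$ be three distinct primes such that $\left(\frac{q}{s}\right)=\left(\frac{q}{r}\right)=(-1)^{\delta_{\nu,2}}$ and $\left(\frac{s}{r}\right)=1$. 1) Let $a,b$ be the integers with $\varepsilon_{\nu qrs}=a+b\sqrt{\nu qrs}$. Then exactly one of the three integers $2^{\delta_{\nu,1}}r(a+(-1)^{\delta_{\nu,1}})$, $2^{\delta_{\nu,2}}q(a-1)$, $2^{\delta_{\nu,2}}s(a+(-1)^{\delta_{\nu,1}})$ is a square in $\mathbb{N}$. Furthermore, for some integers $b_1,b_2$: (a) if $2^{\delta_{\nu,1}}r(a+(-1)^{\delta_{\nu,1}})$ is a square, then $\sqrt{\nu\varepsilon_{\nu qrs}}=b_1\sqrt r+b_2\sqrt{\nu qs}$ and $2^{\delta_{\nu,2}}=(-1)^{\delta_{\nu,1}}rb_1^2+(-1)^{\delta_{\nu,2}}\nu qsb_2^2$; (b) if $2^{\delta_{\nu,2}}q(a-1)$ is a square, then $\sqrt{2\varepsilon_{\nu qrs}}=b_1\sqrt{\nu q}+b_2\sqrt{rs}$ and $2=-2^{\delta_{\nu,2}}qb_1^2+rsb_2^2$; (c) if $2^{\delta_{\nu,2}}s(a+(-1)^{\delta_{\nu,1}})$ is a square, then $\sqrt{2\varepsilon_{\nu qrs}}=b_1\sqrt{\nu s}+b_2\sqrt{qr}$ and $2=(-1)^{\delta_{\nu,1}}2^{\delta_{\nu,2}}sb_1^2+(-1)^{\delta_{\nu,2}}qrb_2^2$.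 2) Let $x,y$ be the integers with $\varepsilon_{\rho qrs}=x+y\sqrt{\rho qrs}$. Then $2^{\delta_{\nu,2}}q(x-1)$ is a square in $\mathbb{N}$, and there are integers $y_1,y_2$ with $\sqrt{\rho\varepsilon_{\rho qrs}}=y_1\sqrt q+y_2\sqrt{\rho rs}$ and $\rho=-qy_1^2+\rho rsy_2^2$.
   Context: For a square-free integer $m>1$, $\varepsilon_m$ denotes the fundamental unit ($>1$) of $\mathbb{Q}(\sqrt m)$. $\delta_{i,j}$ is the Kronecker delta. $\left(\frac{\cdot}{\cdot}\right)$ is the Legendre symbol. *)

(* Defs.v *)
From Stdlib Require Import ZArith Znumtheory Reals List.
Open Scope Z_scope.

Definition delta (i j : Z) : Z := if Z.eqb i j then 1 else 0.

Definition legendre (a p : Z) : Z :=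
  if Z.eqb (a mod p) 0 then 0
  else if existsb (fun x : nat => Z.eqb ((Z.of_nat x * Z.of_nat x) mod p) (a mod p))
                  (seq 0 (Z.to_nat p))
       then 1 else -1.

(* z is a square in N (i.e. z = n^2 for some integer n; then z >= 0). *)
Definition is_square_N (z : Z) : Prop := exists n : Z, z = n * n.

Definition exactly_one (P Q S : Prop) : Prop :=
  (P /\ ~ Q /\ ~ S) \/ (~ P /\ Q /\ ~ S) \/ (~ P /\ ~ Q /\ S).

(* Units of the ring of integers of Q(sqrt m) (m square-free, m > 1),
   as real numbers: every element of O_K is (c + d sqrt m)/2 with c,d in Z,
   and it is a unit iff its norm (c^2 - m d^2)/4 is +-1. *)
Definition unit_OK (m : Z) (u : R) : Prop :=
  exists c d : Z,
    u = ((IZR c + IZR d * sqrt (IZR m)) / 2)%R /\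
    (c * c - m * d * d = 4 \/ c * c - m * d * d = -4).

Definition fund_unit (m : Z) (eps : R) : Prop :=
  unit_OK m eps /\ (1 < eps)%R /\
  forall u : R, unit_OK m u -> (1 < u)%R -> (eps <= u)%R.

(* Main.v *)
Require Import Defs.
From Stdlib Require Import ZArith Znumtheory Reals.
From Stdlib Require Import Lia Lra Psatz List.
Open Scope Z_scope.

Module NT.
From mathcomp Require Import all_boot all_algebra all_field ssrZ zify.
Import GRing.Theory.
Local Open Scope ring_scope.

Section Euler.
Variable p : nat.
Hypothesis pp : prime p.
Hypothesis podd : odd p.
Local Notation F := 'F_p.
Local Notation P := (p./2).

Lemma p_eq : p = (P + P).+1.
Proof. have := odd_double_half p. rewrite podd -addnn. lia. Qed.

Lemma P_gt0 : (0 < P)%N.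
Proof. have := prime_gt1 pp. have := p_eq. lia. Qed.

Lemma fermat (x : F) : x != 0 -> x ^+ (P + P) = 1.
Proof.
move=> x0. have := expf_card x. rewrite card_Fp //.
have -> : x ^+ p = x ^+ (P + P).+1 by rewrite -p_eq.
rewrite exprS => h. apply: (mulfI x0). by rewrite h mulr1.
Qed.

Lemma chi_pm1 (x : F) : x != 0 -> x ^+ P = 1 \/ x ^+ P = -1.
Proof.
move=> x0. have h := fermat _ x0. have : (x ^+ P) ^+ 2 == 1 by rewrite -exprM muln2 -addnn h.
by rewrite sqrf_eq1 => /orP [/eqP ->|/eqP ->]; [left|right].
Qed.

Lemma natF_eq (i j : nat) : (i < p)%N -> (j < p)%N -> (i%:R == j%:R :> F) = (i == j).
Proof.
move=> ip jp. apply/eqP/eqP => [h|-> //].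
move: (congr1 (fun z : F => nat_of_ord z) h) => /=. rewrite !val_Fp_nat // !modn_small //.
Qed.

Lemma natF_eq0 (i : nat) : (0 < i < p)%N -> (i%:R != 0 :> F).
Proof.
move=> /andP [i0 ip]. apply/eqP => h; have := @natF_eq i 0 ip (prime_gt0 pp).
rewrite h eqxx => /esym/eqP; lia.
Qed.

Lemma one_neq_m1 : (1 : F) != -1.
Proof.
apply/negP => /eqP h. have : (2%:R : F) != 0.
  apply: natF_eq0. have := prime_gt1 pp. have := p_eq. lia.
have -> : (2%:R : F) = 1 + 1 by [].
by rewrite {2}h addrN eqxx.
Qed.

Lemma euler_hard (x : F) : x != 0 -> x ^+ P = 1 -> exists y, y ^+ 2 = x.
Proof.
move=> x0 xP. have [y /eqP hy|nsq] := pickP (fun y : F => y ^+ 2 == x); first by exists y.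
exfalso.
pose rs := x :: [seq (k%:R : F) ^+ 2 | k <- iota 1 P].
have : (size rs <= P)%N.
  apply: (max_unity_roots P_gt0).
  - rewrite /= unity_rootE xP eqxx /=. apply/allP => z /mapP [k kin ->].
    rewrite unity_rootE -exprM mul2n -addnn fermat //.
    apply: natF_eq0. move: kin; rewrite mem_iota. have := p_eq. lia.
  - rewrite /= map_inj_in_uniq ?iota_uniq ?andbT.
    + apply/mapP => [[k _ h]]. have := nsq (k%:R). by rewrite /= -h eqxx.
    + move=> i j; rewrite !mem_iota => hi hj /eqP. rewrite eqf_sqr => /orP [|].
      * rewrite natF_eq; [by move/eqP| have := p_eq; lia | have := p_eq; lia].
      * rewrite -addr_eq0 -natrD => h. exfalso. move: h. apply/negP. apply: natF_eq0.
        have := p_eq. lia.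
by rewrite /= size_map size_iota ltnn.
Qed.

End Euler.

Section Gauss.
Variable p : nat.
Hypothesis pp : prime p.
Hypothesis podd : odd p.
Local Notation F := 'F_p.
Local Notation P := (p./2).
Variable a : nat.
Hypothesis pa : ~~ (p %| a)%N.

Definition rr k := (k * a %% p)%N.
Definition cc k := (P < rr k)%N.
Definition mm k := if cc k then (p - rr k)%N else rr k.
Definition mu := (\sum_(k <- iota 1 P) (cc k : nat))%N.

Lemma rr_lt k : (rr k < p)%N.
Proof. by rewrite /rr ltn_pmod // prime_gt0. Qed.

Lemma a0 : (a%:R : F) != 0.
Proof. by rewrite -(dvdn_pcharf (pchar_Fp pp)). Qed.

Lemma key k : (k * a)%:R = (if cc k then - (mm k)%:R else (mm k)%:R) :> F.
Proof.
rewrite /mm -(Fp_nat_mod pp) -/(rr k); case: (cc k) => //.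
by rewrite natrB ?(ltnW (rr_lt k)) // pchar_Fp_0 // sub0r opprK.
Qed.

Lemma inr k : k \in iota 1 P -> (0 < k < p)%N.
Proof. rewrite mem_iota. have := p_eq _ pp podd. lia. Qed.

Lemma L1 i j : i \in iota 1 P -> j \in iota 1 P -> (i * a)%:R = (j * a)%:R :> F -> i = j.
Proof.
move=> hi hj; rewrite !natrM => /(mulIf a0) /eqP.
rewrite natF_eq //; [by move/eqP | by have := inr _ hi; lia | by have := inr _ hj; lia].
Qed.

Lemma L2 i j : i \in iota 1 P -> j \in iota 1 P -> (i * a)%:R = - (j * a)%:R :> F -> False.
Proof.
move=> hi hj /eqP; rewrite -addr_eq0 -natrD -mulnDl natrM mulf_eq0 (negbTE a0) orbF.
apply/negP/natF_eq0 => //. move: hi hj; rewrite !mem_iota. have := p_eq _ pp podd. lia.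
Qed.

Lemma mm_inj : {in iota 1 P &, injective mm}.
Proof.
move=> i j hi hj e. have ki := key i. have kj := key j. rewrite e in ki.
move: ki kj; case: (cc i); case: (cc j) => ki kj.
- by apply: (L1 i j hi hj); rewrite ki kj.
- by exfalso; apply: (L2 i j hi hj); rewrite ki kj.
- by exfalso; apply: (L2 i j hi hj); rewrite ki kj opprK.
- by apply: (L1 i j hi hj); rewrite ki kj.
Qed.

Lemma mm_range k : k \in iota 1 P -> mm k \in iota 1 P.
Proof.
move=> hk. have := inr _ hk => /andP [k0 kp].
have r0 : (0 < rr k)%N.
  rewrite lt0n /rr -/(dvdn p (k * a)) Euclid_dvdM // negb_or pa andbT.
  apply/negP => /(dvdn_leq k0); lia.
have := rr_lt k. rewrite mem_iota /mm /cc. have := p_eq _ pp podd. case: ifP; lia.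
Qed.

Lemma perm_mm : perm_eq [seq mm k | k <- iota 1 P] (iota 1 P).
Proof.
apply: uniq_perm.
- by rewrite map_inj_in_uniq ?iota_uniq //; apply: mm_inj.
- exact: iota_uniq.
- have [] := uniq_min_size (s1 := [seq mm k | k <- iota 1 P]) (s2 := iota 1 P).
  + by rewrite map_inj_in_uniq ?iota_uniq //; apply: mm_inj.
  + by move=> x /mapP [k hk ->]; apply: mm_range.
  + by rewrite size_map.
  + done.
Qed.

Lemma gauss : (a%:R : F) ^+ P = (-1) ^+ mu.
Proof.
have e1 : \prod_(k <- iota 1 P) ((k * a)%:R : F) = (\prod_(k <- iota 1 P) (k%:R : F)) * a%:R ^+ P.
  rewrite -[in X in _ = _ * X](size_iota 1 P) -sum1_size -prodrXr -big_split /=.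
  by apply: eq_bigr => k _; rewrite natrM expr1.
have e2 : \prod_(k <- iota 1 P) ((k * a)%:R : F) = (-1) ^+ mu * \prod_(k <- iota 1 P) (k%:R : F).
  rewrite /mu -prodrXr.
  rewrite -[X in _ = _ * X](perm_big _ perm_mm) big_map -big_split /=.
  apply: eq_bigr => k _; rewrite key; case: (cc k) => /=; by rewrite ?mulN1r ?mul1r ?expr1 ?expr0.
have nz : \prod_(k <- iota 1 P) (k%:R : F) != 0.
  rewrite prodf_seq_neq0; apply/allP => k hk /=; apply: natF_eq0 => //; exact: inr.
apply: (mulfI nz). by rewrite -e1 e2 mulrC.
Qed.

Lemma ind_sum (s : seq nat) (f g F1 F2 F3 : nat -> nat) :
 (forall k, f k * a + 2 * g k = F1 k * p + F2 k + F3 k * p)%N ->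
 ((\sum_(k<-s) f k) * a + 2 * (\sum_(k<-s) g k) =
   (\sum_(k<-s) F1 k) * p + \sum_(k<-s) F2 k + (\sum_(k<-s) F3 k) * p)%N.
Proof.
move=> H; elim: s => [|x s IH]; first by rewrite !big_nil.
rewrite !big_cons. have := H x. nia.
Qed.

Lemma eisenstein : odd a -> odd mu = odd (\sum_(k <- iota 1 P) (k * a %/ p))%N.
Proof.
move=> aodd.
have h : forall k, (k * a + 2 * (cc k * mm k) = (k * a %/ p) * p + mm k + cc k * p)%N.
  move=> k. have := divn_eq (k * a) p. have := rr_lt k. rewrite /mm -/(rr k).
  case: (cc k) => /=; lia.
have := ind_sum (iota 1 P) id (fun k => cc k * mm k)%N (fun k => k * a %/ p)%N mm (fun k => (cc k : nat)) h.
rewrite -(perm_big _ perm_mm) big_map /= -/mu.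
set S := (\sum_(k <- iota 1 P) k)%N. set X := (\sum_(k <- _) (cc k * mm k))%N.
set Fl := (\sum_(k <- _) (k * a %/ p))%N.
move=> ee. move: aodd podd ee.
move=> ha hp ee.
have [a' ea] : exists a', a = a'.*2.+1 by exists a./2; have := odd_double_half a; rewrite ha; lia.
have [p' ep] : exists p', p = p'.*2.+1 by exists p./2; have := odd_double_half p; rewrite hp; lia.
rewrite ea ep in ee. nia.
Qed.

End Gauss.

Lemma sum_le_min (N Q : nat) : (\sum_(y <- iota 1 Q) (y <= N : nat) = minn N Q)%N.
Proof.
elim: Q => [|Q IH]; first by rewrite big_nil; lia.
rewrite -[Q.+1]addn1 iotaD big_cat /= IH big_cons big_nil. lia.
Qed.

Lemma sum_gt_min (h n : nat) : (\sum_(k <- iota 1 n) (h < k : nat) = n - minn n h)%N.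
Proof.
elim: n => [|n IH]; first by rewrite big_nil.
rewrite -[n.+1]addn1 iotaD big_cat /= IH big_cons big_nil. lia.
Qed.

Lemma signr_eq1 (F : fieldType) (n : nat) : (1 : F) != -1 -> ((-1 : F) ^+ n == 1) = ~~ odd n.
Proof.
move=> h. rewrite -signr_odd. case: (odd n) => /=; rewrite ?expr1 ?expr0 ?eqxx //.
by apply/negbTE; rewrite eq_sym.
Qed.

Lemma chiF (r a : nat) (rp : prime r) (rodd : odd r) : ~~ (r %| a)%N -> odd a ->
  (((a%:R : 'F_r) ^+ r./2 == 1) = ~~ odd (\sum_(k <- iota 1 r./2) (k * a %/ r))%N).
Proof.
move=> ra aodd. rewrite gauss // signr_eq1 ?one_neq_m1 // eisenstein //.
Qed.

Section Recip.
Variables p q : nat.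
Hypotheses (pp : prime p) (qp : prime q) (podd : odd p) (qodd : odd q) (pq : p != q).
Local Notation P := (p./2).
Local Notation Q := (q./2).

Lemma pq_ne x y : (0 < x < p)%N -> (p * y != q * x)%N.
Proof.
move=> /andP [x0 xp]. apply/eqP => e.
have : (p %| q * x)%N by rewrite -e dvdn_mulr.
rewrite Euclid_dvdM // => /orP [|].
- by rewrite dvdn_prime2 // (negbTE pq).
- move/(dvdn_leq x0). lia.
Qed.

Lemma lattice :
  (\sum_(x <- iota 1 P) (x * q %/ p) + \sum_(y <- iota 1 Q) (y * p %/ q) = P * Q)%N.
Proof.
have ep := p_eq _ pp podd. have eq := p_eq _ qp qodd.
have h1 : (\sum_(x <- iota 1 P) (x * q %/ p) =
     \sum_(x <- iota 1 P) \sum_(y <- iota 1 Q) (p * y < q * x : nat))%N.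
  rewrite big_seq [RHS]big_seq; apply: eq_bigr => x; rewrite mem_iota => hx.
  have le : (x * q %/ p <= Q)%N by rewrite -ltnS ltn_divLR ?prime_gt0 //; nia.
  rewrite -[LHS](elimT minn_idPl le).
  - rewrite -sum_le_min big_seq [RHS]big_seq; apply: eq_bigr => y; rewrite mem_iota => hy.
    rewrite leq_divRL ?prime_gt0 //. have : (0 < x < p)%N by lia. move=> H. have := pq_ne x y H. rewrite mulnC (mulnC x). 
    case: ltngtP => //.
have h2 : (\sum_(y <- iota 1 Q) (y * p %/ q) =
     \sum_(y <- iota 1 Q) \sum_(x <- iota 1 P) (q * x < p * y : nat))%N.
  rewrite big_seq [RHS]big_seq; apply: eq_bigr => y; rewrite mem_iota => hy.
  have le : (y * p %/ q <= P)%N by rewrite -ltnS ltn_divLR ?prime_gt0 //; nia.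
  rewrite -[LHS](elimT minn_idPl le).
  - rewrite -sum_le_min big_seq [RHS]big_seq; apply: eq_bigr => x; rewrite mem_iota => hx.
    rewrite leq_divRL ?prime_gt0 //. have : (0 < y < q)%N by lia.
    have qp_ne : forall x y, (0 < x < q)%N -> (q * y != p * x)%N.
      move=> x' y' /andP [x0 xq]. apply/eqP => e.
      have : (q %| p * x')%N by rewrite -e dvdn_mulr.
      rewrite Euclid_dvdM // => /orP [|].
      + by rewrite dvdn_prime2 // eq_sym (negbTE pq).
      + move/(dvdn_leq x0). lia.
    move=> H. have := qp_ne y x H. rewrite mulnC (mulnC y).
    case: ltngtP => //.
rewrite h1 h2 (exchange_big _ _ (iota 1 Q)) /= -big_split /=.
rewrite mulnC -[Q in (_ = Q * _)%N](size_iota 1 Q) -sum1_size big_distrl /=.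
rewrite big_seq [RHS]big_seq; apply: eq_bigr => y; rewrite mem_iota => hy.
rewrite -big_split /= -[P in (_ = _ * P)%N](size_iota 1 P) -sum1_size mul1n.
rewrite big_seq [RHS]big_seq; apply: eq_bigr => x; rewrite mem_iota => hx.
have : (0 < x < p)%N by lia. move=> H. have := pq_ne x y H.
case: ltngtP => //.
Qed.



Lemma recip : odd P -> odd Q ->
  ((q%:R : 'F_p) ^+ P == 1) = ~~ ((p%:R : 'F_q) ^+ Q == 1).
Proof.
move=> oP oQ.
have d1 : ~~ (p %| q)%N by rewrite dvdn_prime2.
have d2 : ~~ (q %| p)%N by rewrite dvdn_prime2 // eq_sym.
rewrite chiF // ?chiF // negbK.
have := lattice. have := oP. have := oQ.
set A := (\sum_(x <- iota 1 P) (x * q %/ p))%N. set B := (\sum_(y <- iota 1 Q) (y * p %/ q))%N.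
move=> h1 h2 h3. have : odd (A + B) by rewrite h3 oddM h1 h2.
rewrite oddD. by case: (odd A); case: (odd B).
Qed.

End Recip.

Lemma two_chi (p : nat) (pp : prime p) (podd : odd p) : (p %% 8 = 3)%N ->
  ((2%:R : 'F_p) ^+ p./2 = -1).
Proof.
move=> p8. have ep := p_eq _ pp podd.
have p2 : ~~ (p %| 2)%N by rewrite dvdn_prime2 //; apply/eqP => e; rewrite e in p8.
rewrite gauss //.
have -> : mu p 2 = (p./2 - minn p./2 (p./2)./2)%N.
  rewrite /mu -sum_gt_min big_seq [RHS]big_seq; apply: eq_bigr => k; rewrite mem_iota => hk.
  rewrite /cc /rr modn_small; last by lia.
  have := odd_double_half p./2. lia.
rewrite -signr_odd.
have : odd (p./2 - minn p./2 (p./2)./2) .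
  have := odd_double_half p./2. have := odd_double_half ((p./2)./2).
  move: (p./2) ep => P eP. move: (P./2) => H.  move: (H./2) => H2. lia.
by move=> ->; rewrite expr1.
Qed.

Lemma two_chi7 (p : nat) (pp : prime p) (podd : odd p) : (p %% 8 = 7)%N ->
  ((2%:R : 'F_p) ^+ p./2 = 1).
Proof.
move=> p8. have ep := p_eq _ pp podd.
have p2 : ~~ (p %| 2)%N by rewrite dvdn_prime2 //; apply/eqP => e; rewrite e in p8.
rewrite gauss //.
have -> : mu p 2 = (p./2 - minn p./2 (p./2)./2)%N.
  rewrite /mu -sum_gt_min big_seq [RHS]big_seq; apply: eq_bigr => k; rewrite mem_iota => hk.
  rewrite /cc /rr modn_small; last by lia.
  have := odd_double_half p./2. lia.
rewrite -signr_odd.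
have : ~~ odd (p./2 - minn p./2 (p./2)./2) .
  have := odd_double_half p./2. have := odd_double_half ((p./2)./2).
  move: (p./2) ep => P eP. move: (P./2) => H.  move: (H./2) => H2. lia.
by move=> /negbTE ->; rewrite expr0.
Qed.

Local Open Scope Z_scope.
Definition phi (p : nat) (z : Z) : 'F_p := ((int_of_Z z)%:~R).

Lemma phiM p x y : phi p (x * y) = (phi p x * phi p y)%R.
Proof. rewrite /phi. have -> : int_of_Z (x*y) = (int_of_Z x * int_of_Z y)%R by lia. by rewrite intrM. Qed.
Lemma phiB p x y : phi p (x - y) = (phi p x - phi p y)%R.
Proof. rewrite /phi. have -> : int_of_Z (x-y) = (int_of_Z x - int_of_Z y)%R by lia. by rewrite intrB. Qed.
Lemma phiN p x : phi p (- x) = (- phi p x)%R.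
Proof. rewrite /phi. have -> : int_of_Z (-x) = (- int_of_Z x)%R by lia. by rewrite intrN. Qed.
Lemma phi_nat p (n : nat) : phi p (Z.of_nat n) = (n%:R)%R.
Proof. rewrite /phi. have -> : int_of_Z (Z.of_nat n) = (n%:Z)%R by lia. by []. Qed.
Lemma phi0 p x : prime p -> (phi p x = 0)%R <-> (Z.of_nat p | x).
Proof. move=> pp. rewrite /phi. have:= (dvdz_pcharf (pchar_Fp pp) (int_of_Z x)).
move=> H; split.
- move/eqP; rewrite -H => /dvdzP [k Hk]. exists (Z_of_int k). lia.
- move=> [k Hk]; apply/eqP; rewrite -H; apply/dvdzP; exists (int_of_Z k). lia.
Qed.

Lemma prime_bridge (pz : Z) : Znumtheory.prime pz -> prime (Z.to_nat pz).
Proof.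
move=> hp. have h2 := prime_ge_2 _ hp.
apply/primeP; split; first lia.
move=> d /dvdnP [k hk]. have hd : (Z.of_nat d | pz)%Z.
  exists (Z.of_nat k). have : Z.of_nat (Z.to_nat pz) = Z.of_nat (k * d) by rewrite hk. lia.
have := prime_divisors _ hp _ hd. lia.
Qed.

Definition chiZ (pz x : Z) : Z :=
  if ((phi (Z.to_nat pz) x) ^+ (Z.to_nat pz)./2 == 1)%R then 1 else (-1).

Section Iface.
Variable pz : Z.
Hypothesis hp : Znumtheory.prime pz.
Hypothesis hodd : (pz mod 2 = 1).
Let p := Z.to_nat pz.
Let pp : prime p := prime_bridge pz hp.
Let podd : odd p.
Proof. have := prime_ge_2 _ hp. rewrite /p => h2. have := Z_div_mod_eq_full pz 2. lia. Qed.
Let pzE : pz = Z.of_nat p.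
Proof. have := prime_ge_2 _ hp. rewrite /p => h2. have := Z_div_mod_eq_full pz 2. lia. Qed.

Lemma phi0' x : (phi p x = 0)%R <-> (pz | x).
Proof. by rewrite pzE; apply: phi0. Qed.

Lemma m1_ne1 : ((-1 : 'F_p) == 1)%R = false.
Proof. by rewrite eq_sym (negbTE (one_neq_m1 _ pp podd)). Qed.

Lemma chi_val x : ~ (pz | x) -> (phi p x ^+ p./2)%R = (if chiZ pz x == 1 then 1%R else (-1)%R).
Proof.
move=> hx. have nz : (phi p x != 0)%R by apply/eqP => /phi0'.
rewrite /chiZ -/p. have [->|->] := chi_pm1 _ pp podd _ nz; first by rewrite eqxx.
by rewrite m1_ne1.
Qed.

Lemma chi_pm x : chiZ pz x = 1 \/ chiZ pz x = (-1).
Proof. rewrite /chiZ; case: ifP; auto. Qed.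

Lemma chi_mul x y : ~ (pz | x) -> ~ (pz | y) -> chiZ pz (x * y) = (chiZ pz x * chiZ pz y).
Proof.
move=> hx hy. have hxy : ~ (pz | x * y).
  move=> /(prime_mult _ hp) [] //.
have ex := chi_val x hx. have ey := chi_val y hy. have exy := chi_val (x * y) hxy.
rewrite phiM exprMn ex ey in exy.
have one := one_neq_m1 _ pp podd.
have zz : ((-1 : Z) == 1) = false by [].
move: exy.
case: (chi_pm x) => ->; case: (chi_pm y) => ->; case: (chi_pm (x * y)) => -> //;
 rewrite ?eqxx ?zz ?mul1r ?mulr1 ?mulN1r ?opprK //= => h; exfalso; move: one; by rewrite {1}h eqxx.
Qed.

Lemma chi_sq x : ~ (pz | x) -> chiZ pz (x * x) = 1.
Proof.
move=> hx. have nz : (phi p x != 0)%R by apply/eqP => /phi0'.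
by rewrite /chiZ -/p phiM -expr2 -exprM mul2n -addnn fermat // eqxx.
Qed.

Lemma chi_cong x y : (pz | x - y) -> chiZ pz x = chiZ pz y.
Proof.
move=> /phi0' /eqP; rewrite phiB subr_eq0 => /eqP h. by rewrite /chiZ -/p h.
Qed.

Lemma chi_m1 : (pz mod 4 = 3) -> chiZ pz (-1) = (-1).
Proof.
move=> h4. rewrite /chiZ -/p (_ : -1 = Z.opp 1) // phiN (phi_nat p 1) -signr_odd.
have -> : odd p./2. have := odd_double_half p. have := Z_div_mod_eq_full pz 4. have := prime_ge_2 _ hp. rewrite /p. lia.
by rewrite expr1 eq_sym (negbTE (one_neq_m1 _ pp podd)).
Qed.

Lemma chi_2 : (pz mod 8 = 3) -> chiZ pz 2 = (-1).
Proof.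
move=> h8. rewrite /chiZ -/p (phi_nat p 2) two_chi //; last by have := Z_div_mod_eq_full pz 8; have := prime_ge_2 _ hp; rewrite /p; lia.
by rewrite m1_ne1.
Qed.

Lemma chi_2q : pz mod 8 = 7 -> chiZ pz 2 = 1.
Proof.
move=> h8. rewrite /chiZ -/p (phi_nat p 2) two_chi7 //; last by have := Z_div_mod_eq_full pz 8; have := prime_ge_2 _ hp; rewrite /p; lia.
Qed.

Lemma chi_leg1 a : legendre a pz = 1 -> chiZ pz a = 1.
Proof.
rewrite /legendre. case: Z.eqb_spec => // ha.
case e: List.existsb => // _. move/List.existsb_exists: e => [x [_ /Z.eqb_eq hx]].
have hd : (pz | Z.of_nat x * Z.of_nat x - a).
  have h0 : pz <> 0 by have := prime_ge_2 _ hp; lia.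
  have := Z_div_mod_eq_full (Z.of_nat x * Z.of_nat x) pz.
  have := Z_div_mod_eq_full a pz. move=> e1 e2.
  exists ((Z.of_nat x * Z.of_nat x) / pz - a / pz). nia.
rewrite -(chi_cong _ _ hd) chi_sq //.
move=> hx'. apply: ha. apply/Z.mod_divide; first by have := prime_ge_2 _ hp; lia.
have : (pz | Z.of_nat x * Z.of_nat x) by apply: Z.divide_mul_l.
move=> h1. have := Z.divide_sub_r _ _ _ h1 hd. by rewrite Z.sub_sub_distr Z.sub_diag Z.add_0_l.
Qed.

Lemma chi_legm1 a : legendre a pz = (-1) -> chiZ pz a = (-1).
Proof.
rewrite /legendre. case: Z.eqb_spec => // ha.
case e: List.existsb => // _.
have [h1|//] := chi_pm a. exfalso.
have h0 : pz <> 0 by have := prime_ge_2 _ hp; lia.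
have hna : ~ (pz | a).
  by move=> hd; apply: ha; apply/Z.mod_divide.
have := chi_val a hna. rewrite h1 eqxx => /(euler_hard _ pp podd _) [].
  by apply/eqP => /phi0'.
move=> y hy. set n := nat_of_ord y.
have nlt : (n < p)%N.
  have : (n < (Zp_trunc (pdiv p)).+2)%N := ltn_ord y. by rewrite Fp_cast.
have yn : y = (n%:R)%R.
  apply: val_inj => /=. by rewrite val_Fp_nat // modn_small.
have hd : (pz | Z.of_nat n * Z.of_nat n - a).
  apply/phi0'. by rewrite phiB phiM phi_nat -yn -expr2 hy subrr.
have hm : (Z.of_nat n * Z.of_nat n) mod pz = a mod pz.
  move: hd => [k hk]. have -> : Z.of_nat n * Z.of_nat n = a + k * pz by lia.
  by rewrite Z_mod_plus_full.
have : List.existsb (fun x : nat => (Z.of_nat x * Z.of_nat x) mod pz =? a mod pz)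
         (List.seq 0 (Z.to_nat pz)) = true.
  apply/List.existsb_exists. exists n; split.
  - apply/List.in_seq. rewrite -/p. lia.
  - by apply/Z.eqb_eq.
by rewrite e.
Qed.


End Iface.

Lemma chi_recip pz qz : Znumtheory.prime pz -> Znumtheory.prime qz ->
  pz mod 4 = 3 -> qz mod 4 = 3 -> pz <> qz -> chiZ pz qz = - chiZ qz pz.
Proof.
move=> hp hq h4p h4q hne.
have gp := prime_ge_2 _ hp. have gq := prime_ge_2 _ hq.
have pp := prime_bridge pz hp. have qp := prime_bridge qz hq.
have e4p := Z_div_mod_eq_full pz 4. have e4q := Z_div_mod_eq_full qz 4.
set p := Z.to_nat pz in pp *. set q := Z.to_nat qz in qp *.
have ep : pz = Z.of_nat p by rewrite /p; lia.
have eq : qz = Z.of_nat q by rewrite /q; lia.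
have podd : odd p by rewrite /p; lia.
have qodd : odd q by rewrite /q; lia.
have oP : odd p./2 by have := odd_double_half p; rewrite /p; lia.
have oQ : odd q./2 by have := odd_double_half q; rewrite /q; lia.
have pq : p != q by apply/eqP; rewrite /p /q; lia.
have := recip _ _ pp qp podd qodd pq oP oQ.
rewrite /chiZ -/p -/q. rewrite [in phi p _]eq [in phi q _]ep !phi_nat => ->.
by case: (_ == _).
Qed.

End NT.

Set Bullet Behavior "Strict Subproofs".

Lemma gcd_sq a b : Z.gcd (a*a) (b*b) = Z.gcd a b * Z.gcd a b.
Proof.
destruct (Z.eq_dec (Z.gcd a b) 0) as [h0|h0].
- apply Z.gcd_eq_0 in h0. destruct h0; subst. reflexivity.
- set (g := Z.gcd a b).
  assert (hg : 0 < g) by (pose proof (Z.gcd_nonneg a b); unfold g; lia).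
  destruct (Z.gcd_divide_l a b) as [a1 ha]. destruct (Z.gcd_divide_r a b) as [b1 hb].
  fold g in ha, hb.
  assert (h1 : Z.gcd a1 b1 = 1).
  { assert (e1 : a1 = a / g) by (rewrite ha, Z.div_mul; lia).
    assert (e2 : b1 = b / g) by (rewrite hb, Z.div_mul; lia).
    rewrite e1, e2. apply Z.gcd_div_gcd; unfold g; lia. }
  assert (h2 : Z.gcd (a1*a1) (b1*b1) = 1).
  { apply Zgcd_1_rel_prime. apply Zgcd_1_rel_prime in h1.
    apply rel_prime_mult; apply rel_prime_sym; apply rel_prime_mult; apply rel_prime_sym; auto. }
  rewrite ha, hb.
  replace (a1 * g * (a1 * g)) with ((g*g) * (a1*a1)) by ring.
  replace (b1 * g * (b1 * g)) with ((g*g) * (b1*b1)) by ring.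
  rewrite Z.gcd_mul_mono_l, h2. rewrite Z.abs_eq by nia. ring.
Qed.

Lemma coprime_sq x y z : 0 < x -> Z.gcd x y = 1 -> x * y = z * z -> exists u, 0 <= u /\ x = u * u.
Proof.
intros hx hg e. exists (Z.gcd x z). split; [apply Z.gcd_nonneg|].
rewrite <- gcd_sq, <- e.
replace (x*x) with (x*x) by ring.
rewrite Z.gcd_mul_mono_l, hg. lia.
Qed.

Lemma split_sq x y m z : 0 < x -> 0 < y -> 0 < m -> Z.gcd x y = 1 -> x * y = m * (z * z) ->
  exists d d' u v, 0 < d /\ 0 < d' /\ d * d' = m /\ 0 <= u /\ 0 <= v /\ x = d * (u * u) /\ y = d' * (v * v).
Proof.
intros hx hy hm hg e.
set (d := Z.gcd x m).
assert (hd : 0 < d).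
{ pose proof (Z.gcd_nonneg x m). assert (d <> 0); [|unfold d in *; lia].
  intro h. apply Z.gcd_eq_0 in h. lia. }
destruct (Z.gcd_divide_l x m) as [x1 hx1]. destruct (Z.gcd_divide_r x m) as [k1 hk1].
fold d in hx1, hk1.
assert (hc : Z.gcd x1 k1 = 1).
{ assert (e1 : x1 = x / d) by (rewrite hx1, Z.div_mul; lia).
  assert (e2 : k1 = m / d) by (rewrite hk1, Z.div_mul; lia).
  rewrite e1, e2. apply Z.gcd_div_gcd; unfold d; lia. }
assert (e2 : x1 * y = k1 * (z * z)).
{ apply (Z.mul_cancel_l _ _ d); [lia|]. rewrite hx1, hk1 in e. nia. }
assert (hk : (k1 | y)).
{ apply (Z.gauss _ x1). exists (z*z). rewrite e2. ring. rewrite Z.gcd_comm; auto. }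
destruct hk as [y1 hy1].
assert (hk1p : 0 < k1) by nia.
assert (hx1p : 0 < x1) by nia.
assert (hy1p : 0 < y1) by nia.
assert (e3 : x1 * y1 = z * z).
{ apply (Z.mul_cancel_l _ _ k1); [lia|]. rewrite hy1 in e2. nia. }
assert (hg1 : Z.gcd x1 y1 = 1).
{ apply Z.gcd_unique; [lia| apply Z.divide_1_l | apply Z.divide_1_l |].
  intros t ht1 ht2. rewrite <- hg. apply Z.gcd_greatest.
  - rewrite hx1. apply Z.divide_mul_l; auto.
  - rewrite hy1. apply Z.divide_mul_l; auto. }
destruct (coprime_sq x1 y1 z hx1p hg1 e3) as [u [hu eu]].
destruct (coprime_sq y1 x1 z hy1p ltac:(rewrite Z.gcd_comm; auto) ltac:(lia)) as [v [hv ev]].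
exists d, k1, u, v. repeat split; try lia; try (rewrite hx1, eu; ring); try (rewrite hy1, ev; ring).
Qed.

Lemma sq_div t n : (t * t | n * n) -> (t | n).
Proof.
intros h.
assert (e : Z.gcd (t*t) (n*n) = Z.abs t * Z.abs t).
{ replace (Z.abs t * Z.abs t) with (t * t) by nia.
  apply Z.gcd_unique; [nia | apply Z.divide_refl | auto | auto]. }
rewrite gcd_sq in e.
assert (Z.gcd t n = Z.abs t) by (pose proof (Z.gcd_nonneg t n); nia).
apply Z.divide_abs_l. rewrite <- H. apply Z.gcd_divide_r.
Qed.

Lemma not_sq K t n p : prime p -> t <> 0 -> (p | K) -> ~ (p * p | K) -> K * (t * t) = n * n -> False.
Proof.
intros hp ht hpK hpp e.
assert (htn : (t * t | n * n)) by (exists K; lia).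
apply sq_div in htn. destruct htn as [w hw]. subst n.
assert (eK : K = w * w) by (apply (Z.mul_cancel_l _ _ (t*t)); nia).
subst K. apply hpp. destruct (prime_mult p hp w w hpK) as [h|h];
  destruct h as [k hk]; exists (k*k); subst; ring.
Qed.

Lemma peel p d k : prime p -> 0 < d -> (d | p * k) ->
  (exists d1, d = p * d1 /\ (d1 | k) /\ 0 < d1) \/ ((d | k) /\ ~ (p | d)).
Proof.
intros hp hd hdk. pose proof (prime_ge_2 p hp).
destruct (Zdivide_dec p d) as [h|h].
- left. destruct h as [d1 e]. exists d1. repeat split; try nia.
  subst d. apply (Z.mul_divide_cancel_l _ _ p); [lia|]. rewrite Z.mul_comm; auto.
- right. split; auto. apply (Z.gauss _ p); auto.
  apply Zgcd_1_rel_prime. apply rel_prime_sym. apply prime_rel_prime; auto.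
Qed.

Lemma div1 d : 0 < d -> (d | 1) -> d = 1.
Proof. intros h1 h2. apply Z.divide_pos_le in h2; lia. Qed.

Lemma prime_ndiv p x : prime p -> prime x -> p <> x -> ~ (p | x).
Proof. intros hp hx hne h. apply hne. apply prime_div_prime; auto. Qed.

Lemma ndiv_small p c : prime p -> 2 < p -> 0 < c < p -> ~ (p | c).
Proof. intros hp h2 hc h. apply Z.divide_pos_le in h; lia. Qed.

Lemma ndiv_m1 p : prime p -> ~ (p | -1).
Proof. intros hp h. pose proof (prime_ge_2 p hp). apply Z.divide_opp_r in h. apply Z.divide_pos_le in h; lia. Qed.

Lemma gcd_odd2 x : x mod 2 = 1 -> Z.gcd x 2 = 1.
Proof.
intros h. pose proof (Z.gcd_divide_r x 2) as h2. pose proof (Z.gcd_nonneg x 2).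
apply Z.divide_pos_le in h2 as h3; [|lia].
destruct (Z.eq_dec (Z.gcd x 2) 0) as [e|e].
- apply Z.gcd_eq_0 in e; lia.
- assert (Z.gcd x 2 = 1 \/ Z.gcd x 2 = 2) as [e'|e'] by lia; auto.
  pose proof (Z.gcd_divide_l x 2) as [k hk]. rewrite e' in hk. subst x.
  rewrite Z_mod_mult in h. lia.
Qed.

Lemma dec a b m : 0 < m -> m mod 4 <> 0 -> 1 < a -> 0 < b -> a*a - m*(b*b) = 1 ->
 exists d d' u v, 0<d /\ 0<d' /\ d*d' = m /\ 0<u /\ 0<v /\
  ((a - 1 = 2*d*(u*u) /\ a + 1 = 2*d'*(v*v) /\ b = 2*u*v) \/
   (a - 1 = d*(u*u) /\ a + 1 = d'*(v*v) /\ b = u*v /\ a mod 2 = 0)).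
Proof.
intros hm hm4 ha hb e.
pose proof (Z_div_mod_eq_full a 2) as ea. pose proof (Z.mod_pos_bound a 2 ltac:(lia)) as ba.
set (t := a / 2) in *.
destruct (Z.eq_dec (a mod 2) 1) as [ao|ae].
-
  pose proof (Z_div_mod_eq_full b 2) as eb. pose proof (Z.mod_pos_bound b 2 ltac:(lia)) as bb.
  set (w := b / 2) in *.
  destruct (Z.eq_dec (b mod 2) 1) as [bo|be].
  { exfalso. apply hm4. assert (hh : m = (t*t + t - m*(w*w+w)) * 4) by nia.
    rewrite hh. apply Z_mod_mult. }
  assert (b = 2 * w) by lia.
  assert (hw : 0 < w) by lia. assert (ht : 0 < t) by lia.
  assert (ex : t * (t + 1) = m * (w * w)) by nia.
  assert (hg : Z.gcd t (t+1) = 1).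
  { replace (t+1) with (1 + 1*t) by ring. rewrite Z.gcd_add_mult_diag_r. apply Z.gcd_1_r. }
  destruct (split_sq t (t+1) m w ht ltac:(lia) hm hg ex) as (d & d' & u & v & hd & hd' & edd & hu & hv & eu & ev).
  assert (u <> 0) by (intro; subst u; lia). assert (v <> 0) by (intro; subst v; lia).
  assert (hz : w = u * v).
  { assert (w * w = (u*v)*(u*v)) by (apply (Z.mul_cancel_l _ _ m); [lia|]; rewrite <- ex, ev, eu, <- edd; ring).
    nia. }
  exists d, d', u, v. split; [lia|]. split; [lia|]. split; [lia|]. split; [lia|]. split; [lia|]. left. repeat split; nia.
-
  assert (ao : a mod 2 = 0) by lia.
  assert (hg : Z.gcd (a-1) (a+1) = 1).
  { replace (a+1) with (2 + 1*(a-1)) by ring. rewrite Z.gcd_add_mult_diag_r. apply gcd_odd2.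
    replace (a - 1) with (1 + (t - 1) * 2) by lia. rewrite Z_mod_plus_full. reflexivity. }
  assert (ex : (a-1)*(a+1) = m*(b*b)) by nia.
  destruct (split_sq (a-1) (a+1) m b ltac:(lia) ltac:(lia) hm hg ex) as (d & d' & u & v & hd & hd' & edd & hu & hv & eu & ev).
  assert (u <> 0) by (intro; subst u; lia). assert (v <> 0) by (intro; subst v; lia).
  assert (hz : b = u * v).
  { assert (b * b = (u*v)*(u*v)) by (apply (Z.mul_cancel_l _ _ m); [lia|]; rewrite <- ex, eu, ev, <- edd; ring).
    nia. }
  exists d, d', u, v. split; [lia|]. split; [lia|]. split; [lia|]. split; [lia|]. split; [lia|]. right. repeat split; try nia; lia.
Qed.

Notation chi := NT.chiZ.

Lemma oddp t : prime t -> t <> 2 -> t mod 2 = 1.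
Proof.
intros ht h2. pose proof (prime_ge_2 t ht).
destruct (Z.eq_dec (t mod 2) 1) as [e|e]; auto. exfalso.
assert (t mod 2 = 0) by (pose proof (Z.mod_pos_bound t 2); lia).
assert (h : (2 | t)) by (apply Z.mod_divide; lia).
apply prime_div_prime in h; auto using prime_2.
Qed.

Lemma chi_mul' t x y : prime t -> t <> 2 -> ~ (t | x) -> ~ (t | y) -> chi t (x * y) = chi t x * chi t y.
Proof. intros ht h2. apply NT.chi_mul; auto using oddp. Qed.

Lemma chi_one t : prime t -> t <> 2 -> chi t 1 = 1.
Proof. intros ht h2. apply (NT.chi_sq t ht (oddp t ht h2) 1). intros h. apply Z.divide_pos_le in h; [|lia]. pose proof (prime_ge_2 t ht); lia. Qed.

Lemma legB t A B c u v : prime t -> t <> 2 -> (t | B) -> ~ (t | c) ->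
  A*(v*v) - B*(u*u) = c -> chi t A = chi t c.
Proof.
intros ht h2 hB hc e.
assert (hA : ~ (t | A)).
{ intros hA. apply hc. rewrite <- e. apply Z.divide_sub_r; apply Z.divide_mul_l; auto. }
assert (hv : ~ (t | v)).
{ intros hv. apply hc. rewrite <- e. apply Z.divide_sub_r; [apply Z.divide_mul_r, Z.divide_mul_l; auto| apply Z.divide_mul_l; auto]. }
pose proof (oddp t ht h2) as ho.
rewrite <- (NT.chi_cong t ht ho (A*(v*v)) c).
- rewrite (NT.chi_mul t ht ho); auto.
  + rewrite (NT.chi_sq t ht ho); auto. ring.
  + intros h. destruct (prime_mult t ht v v h); auto.
- replace (A*(v*v) - c) with (B*(u*u)) by lia. apply Z.divide_mul_l; auto.
Qed.

Lemma legA t A B c u v : prime t -> t <> 2 -> (t | A) -> ~ (t | c) ->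
  A*(v*v) - B*(u*u) = c -> chi t (-1) * chi t B = chi t c.
Proof.
intros ht h2 hA hc e.
assert (hB : ~ (t | B)).
{ intros hB. apply hc. rewrite <- e. apply Z.divide_sub_r; apply Z.divide_mul_l; auto. }
assert (hu : ~ (t | u)).
{ intros hu. apply hc. rewrite <- e. apply Z.divide_sub_r; [apply Z.divide_mul_l; auto | apply Z.divide_mul_r, Z.divide_mul_l; auto]. }
pose proof (oddp t ht h2) as ho.
assert (h1 : ~ (t | -1)) by (apply ndiv_m1; auto).
rewrite <- (NT.chi_cong t ht ho ((-1) * B *(u*u)) c).
- rewrite (NT.chi_mul t ht ho); auto.
  + rewrite (NT.chi_sq t ht ho); auto. rewrite (NT.chi_mul t ht ho); auto. ring.
  + intros h. destruct (prime_mult t ht _ _ h); auto.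
  + intros h. destruct (prime_mult t ht u u h); auto.
- replace ((-1) * B * (u*u) - c) with (- (A*(v*v))) by lia. apply Z.divide_opp_r, Z.divide_mul_l; auto.
Qed.

Definition l8 : list Z := 0::1::2::3::4::5::6::7::nil.
Definition chk8 (a b c : Z) : bool :=
  forallb (fun x => forallb (fun y => negb (Z.eqb ((a*(y*y) - b*(x*x) - c) mod 8) 0)) l8) l8.

Lemma in8 x : 0 <= x < 8 -> In x l8.
Proof. intros h. unfold l8; simpl. lia. Qed.

Lemma mod8_contra A B c u v a b : A*(v*v) - B*(u*u) = c -> A mod 8 = a -> B mod 8 = b ->
  chk8 a b c = true -> False.
Proof.
intros e ha hb hc. unfold chk8 in hc.
rewrite forallb_forall in hc.
pose proof (hc (u mod 8) (in8 _ (Z.mod_pos_bound u 8 ltac:(lia)))) as hc'.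
rewrite forallb_forall in hc'.
specialize (hc' (v mod 8) (in8 _ (Z.mod_pos_bound v 8 ltac:(lia)))).
apply Bool.negb_true_iff, Z.eqb_neq in hc'. apply hc'.
pose proof (Z_div_mod_eq_full A 8) as eA. pose proof (Z_div_mod_eq_full B 8) as eB.
pose proof (Z_div_mod_eq_full u 8) as eu. pose proof (Z_div_mod_eq_full v 8) as ev.
set (al := A / 8) in *. set (bl := B / 8) in *. set (mu := u / 8) in *. set (nu := v / 8) in *.
set (x := u mod 8) in *. set (y := v mod 8) in *.
rewrite ha in eA. rewrite hb in eB.
assert (h : a*(y*y) - b*(x*x) - c = - 8 * (al*(v*v) + a*(8*nu*nu + 2*nu*y) - bl*(u*u) - b*(8*mu*mu + 2*mu*x))).
{ clearbody al bl mu nu x y. subst A B u v. rewrite <- e. ring. }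
rewrite h. rewrite Z.mul_comm. replace (-8) with ((-1)*8) by ring. rewrite Z.mul_assoc. apply Z_mod_mult.
Qed.

Lemma mm8 x y rx ry : x mod 8 = rx -> y mod 8 = ry -> (x*y) mod 8 = (rx*ry) mod 8.
Proof. intros h1 h2. rewrite Z.mul_mod by lia. rewrite h1, h2. reflexivity. Qed.

Ltac res8 := match goal with
  | |- (?x * ?y) mod 8 = _ => eapply mm8; [res8 | res8]
  | |- _ => first [eassumption | reflexivity]
  end.

Ltac m8 E := eapply (mod8_contra _ _ _ _ _ _ _ E); [res8 | res8 | vm_compute; reflexivity].

Lemma split_prime p d d' k : prime p -> 0 < d -> 0 < d' -> d * d' = p * k ->
  (exists d1, d = p * d1 /\ 0 < d1 /\ d1 * d' = k) \/ (exists d1, d' = p * d1 /\ 0 < d1 /\ d * d1 = k).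
Proof.
intros hp hd hd' e. pose proof (prime_ge_2 p hp).
assert (h : (p | d * d')) by (rewrite e; apply Z.divide_factor_l).
destruct (prime_mult p hp d d' h) as [hx|hx]; destruct hx as [x hx].
- left. exists x. subst d. split; [ring|]. split; [nia|].
  apply (Z.mul_cancel_l _ _ p); [lia|]. rewrite <- e. ring.
- right. exists x. subst d'. split; [ring|]. split; [nia|].
  apply (Z.mul_cancel_l _ _ p); [lia|]. rewrite <- e. ring.
Qed.

Lemma unit_split d d' : 0 < d -> 0 < d' -> d * d' = 1 -> d = 1 /\ d' = 1.
Proof. intros; nia. Qed.

Ltac enum_step H :=
  match type of H with
  | ?d * ?d' = ?p * ?k =>
    let d1 := fresh "d" in let e := fresh "e" in let hp := fresh "hp" in let H' := fresh "H" in
    destruct (split_prime p d d' k ltac:(assumption) ltac:(assumption) ltac:(assumption) H)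
      as [(d1 & e & hp & H')|(d1 & e & hp & H')]; subst; clear H; try enum_step H'
  | ?d * ?d' = 1 =>
    let e1 := fresh "e" in let e2 := fresh "e" in
    destruct (unit_split d d' ltac:(assumption) ltac:(assumption) H) as [e1 e2]; subst; clear H
  end.

Lemma legA' t A B c u v : A*(v*v) - B*(u*u) = c -> prime t -> t <> 2 -> (t | A) -> ~ (t | c) ->
  chi t (-1) * chi t B = chi t c.
Proof. intros; eapply legA; eauto. Qed.
Lemma legB' t A B c u v : A*(v*v) - B*(u*u) = c -> prime t -> t <> 2 -> (t | B) -> ~ (t | c) ->
  chi t A = chi t c.
Proof. intros; eapply legB; eauto. Qed.

Ltac dvd := first [apply Z.divide_refl | apply Z.divide_mul_l; dvd | apply Z.divide_mul_r; dvd].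

Lemma ndiv_mul t x y : prime t -> ~ (t | x) -> ~ (t | y) -> ~ (t | x * y).
Proof. intros ht h1 h2 h. destruct (prime_mult t ht x y h); auto. Qed.

Ltac ndiv t :=
  match goal with
  | |- ~ (t | ?x * ?y) => apply (ndiv_mul t x y); [assumption | ndiv t | ndiv t]
  | |- ~ (t | -1) => apply ndiv_m1; assumption
  | |- ~ (t | ?c) => apply ndiv_small; [assumption | lia | lia]
  | |- ~ (t | ?x) => apply prime_ndiv; [assumption|assumption|lia]
  end.

Ltac chi_expand t H :=
  repeat (rewrite (chi_mul' t) in H by first [assumption | lia | ndiv t]);
  repeat (rewrite (chi_one t) in H by first [assumption | lia]).

Ltac rewrite_chi H :=
  repeat match goal with
  | h : chi ?t ?x = ?v |- _ =>
      match h with H => fail 1 | _ => rewrite h in H end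
  end.

Ltac legtry t E :=
  first [
    let H := fresh in
    pose proof (legB' t _ _ _ _ _ E ltac:(assumption) ltac:(lia) ltac:(dvd) ltac:(ndiv t)) as H;
    chi_expand t H; rewrite_chi H; lia
  | let H := fresh in
    pose proof (legA' t _ _ _ _ _ E ltac:(assumption) ltac:(lia) ltac:(dvd) ltac:(ndiv t)) as H;
    chi_expand t H; rewrite_chi H; lia ].


Lemma mod48 x k : x mod 8 = k -> x mod 4 = k mod 4.
Proof.
intros h. pose proof (Z_div_mod_eq_full x 8). pose proof (Z_div_mod_eq_full x 4).
pose proof (Z.mod_pos_bound x 8 ltac:(lia)). pose proof (Z.mod_pos_bound x 4 ltac:(lia)).
pose proof (Z_div_mod_eq_full k 4). pose proof (Z.mod_pos_bound k 4 ltac:(lia)). lia.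
Qed.

Section Class1.
Variables q r s : Z.
Hypotheses (hq : prime q) (hr : prime r) (hs : prime s)
  (hqr : q <> r) (hqs : q <> s) (hrs : r <> s)
  (q8 : q mod 8 = 7) (r8 : r mod 8 = 3) (s8 : s mod 8 = 3).

Lemma primes_gt2 : 2 < q /\ 2 < r /\ 2 < s.
Proof.
pose proof (prime_ge_2 q hq); pose proof (prime_ge_2 r hr); pose proof (prime_ge_2 s hs).
repeat split; (assert (x : q <> 2 /\ r <> 2 /\ s <> 2) by (repeat split; intro; subst; discriminate)); lia.
Qed.

Ltac facts :=
  pose proof (prime_ge_2 q hq); pose proof (prime_ge_2 r hr); pose proof (prime_ge_2 s hs);
  destruct primes_gt2 as (q2 & r2 & s2);
  let oq := fresh in let or := fresh in let os := fresh in
  assert (oq : q mod 2 = 1) by (apply oddp; auto; lia);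
  assert (or : r mod 2 = 1) by (apply oddp; auto; lia);
  assert (os : s mod 2 = 1) by (apply oddp; auto; lia);
  assert (Xqm : chi q (-1) = -1) by (apply NT.chi_m1; auto; rewrite (mod48 _ _ q8); reflexivity);
  assert (Xrm : chi r (-1) = -1) by (apply NT.chi_m1; auto; rewrite (mod48 _ _ r8); reflexivity);
  assert (Xsm : chi s (-1) = -1) by (apply NT.chi_m1; auto; rewrite (mod48 _ _ s8); reflexivity);
  assert (Xq2 : chi q 2 = 1) by (apply NT.chi_2q; auto);
  assert (Xr2 : chi r 2 = -1) by (apply NT.chi_2; auto);
  assert (Xs2 : chi s 2 = -1) by (apply NT.chi_2; auto);
  assert (q4 : q mod 4 = 3) by (rewrite (mod48 _ _ q8); reflexivity);
  assert (r4 : r mod 4 = 3) by (rewrite (mod48 _ _ r8); reflexivity);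
  assert (s4 : s mod 4 = 3) by (rewrite (mod48 _ _ s8); reflexivity);
  assert (Rqs : chi q s = - chi s q) by (apply NT.chi_recip; auto);
  assert (Rqr : chi q r = - chi r q) by (apply NT.chi_recip; auto);
  assert (Rsr : chi s r = - chi r s) by (apply NT.chi_recip; auto).


Ltac pick := first [ solve [eexists; eexists; repeat split; lia]
                   | solve [left; pick] | solve [right; pick] ].

Ltac leaf u v E Hmin :=
  first [ solve [exfalso; m8 E]
        | pick
        | solve [exfalso; apply (Hmin u v); lia]
        | solve [exfalso; legtry r E]
        | solve [exfalso; legtry s E]
        | solve [exfalso; legtry q E] ].

Lemma m4_of (m : Z) (k : Z) : m mod 8 = k -> k mod 4 <> 0 -> m mod 4 <> 0.
Proof. intros h1 h2. rewrite (mod48 _ _ h1). auto. Qed.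

Ltac prelude1 a b u v E Hmin :=
  intros Xsq Xrq Xrs ha hb e Hmin; facts;
  let d := fresh "d" in let d' := fresh "d'" in
  let hd := fresh in let hd' := fresh in let edd := fresh in let hu := fresh in let hv := fresh in
  let e1 := fresh "e1" in let e2 := fresh "e2" in let e3 := fresh "e3" in let e4 := fresh "e4" in
  destruct (dec a b (q*r*s) ltac:(lia) ltac:(eapply m4_of; [res8 | vm_compute; discriminate]) ha hb e)
    as (d & d' & u & v & hd & hd' & edd & hu & hv & [(e1 & e2 & e3)|(e1 & e2 & e3 & e4)]);
  [ assert (E : d' * (v*v) - d * (u*u) = 1) by lia
  | assert (E : d' * (v*v) - d * (u*u) = 2) by lia ];
  replace (q*r*s) with (q*(r*(s*1))) in edd by ring;
  enum_step edd.

Definition Hmin_prop (m a : Z) := forall u v, 0 < u -> 0 < v -> v*v - m*(u*u) = 1 -> a - 1 = 2*m*(u*u) -> False.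

Lemma class1p a b : chi s q = 1 -> chi r q = 1 -> chi r s = 1 ->
  1 < a -> 0 < b -> a*a - (q*r*s)*(b*b) = 1 -> Hmin_prop (q*r*s) a ->
  (exists u v, 0 < u /\ 0 < v /\ a - 1 = 2*r*(u*u) /\ a + 1 = 2*(q*s)*(v*v) /\ b = 2*u*v) \/
  (exists u v, 0 < u /\ 0 < v /\ a - 1 = q*(u*u) /\ a + 1 = (r*s)*(v*v) /\ b = u*v) \/
  (exists u v, 0 < u /\ 0 < v /\ a - 1 = s*(u*u) /\ a + 1 = (q*r)*(v*v) /\ b = u*v).
Proof.
prelude1 a b u v E Hmin.
all: leaf u v E Hmin.
Qed.

Lemma class1m a b : chi s q = -1 -> chi r q = -1 -> chi r s = 1 ->
  1 < a -> 0 < b -> a*a - (q*r*s)*(b*b) = 1 -> Hmin_prop (q*r*s) a ->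
  (exists u v, 0 < u /\ 0 < v /\ a - 1 = 2*q*(u*u) /\ a + 1 = 2*(r*s)*(v*v) /\ b = 2*u*v).
Proof.
prelude1 a b u v E Hmin.
all: leaf u v E Hmin.
Qed.

Ltac prelude2 a b u v E Hmin :=
  intros Xsq Xrq Xrs ha hb e Hmin; facts; pose proof prime_2;
  let d := fresh "d" in let d' := fresh "d'" in
  let hd := fresh in let hd' := fresh in let edd := fresh in let hu := fresh in let hv := fresh in
  let e1 := fresh "e1" in let e2 := fresh "e2" in let e3 := fresh "e3" in let e4 := fresh "e4" in
  destruct (dec a b (2*q*r*s) ltac:(lia) ltac:(eapply m4_of; [res8 | vm_compute; discriminate]) ha hb e)
    as (d & d' & u & v & hd & hd' & edd & hu & hv & [(e1 & e2 & e3)|(e1 & e2 & e3 & e4)]);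
  [ assert (E : d' * (v*v) - d * (u*u) = 1) by lia;
    replace (2*q*r*s) with (2*(q*(r*(s*1)))) in edd by ring;
    enum_step edd
  | exfalso; pose proof (Z_div_mod_eq_full a 2) as ea;
    assert (a*a - (2*q*r*s)*(b*b) = 2 * (2*(a/2)*(a/2) - q*r*s*(b*b))) by (rewrite ea at 1 2; rewrite e4; ring);
    lia ].

Lemma class2m a b : chi s q = -1 -> chi r q = -1 -> chi r s = 1 ->
  1 < a -> 0 < b -> a*a - (2*q*r*s)*(b*b) = 1 -> Hmin_prop (2*q*r*s) a ->
  (exists u v, 0 < u /\ 0 < v /\ a - 1 = 2*q*(u*u) /\ a + 1 = 4*(r*s)*(v*v) /\ b = 2*u*v) \/
  (exists u v, 0 < u /\ 0 < v /\ a - 1 = 2*(q*s)*(u*u) /\ a + 1 = 4*r*(v*v) /\ b = 2*u*v) \/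
  (exists u v, 0 < u /\ 0 < v /\ a - 1 = 4*(q*r)*(u*u) /\ a + 1 = 2*s*(v*v) /\ b = 2*u*v).
Proof.
prelude2 a b u v E Hmin.
all: leaf u v E Hmin.
Qed.

Lemma class2p a b : chi s q = 1 -> chi r q = 1 -> chi r s = 1 ->
  1 < a -> 0 < b -> a*a - (2*q*r*s)*(b*b) = 1 -> Hmin_prop (2*q*r*s) a ->
  (exists u v, 0 < u /\ 0 < v /\ a - 1 = 4*q*(u*u) /\ a + 1 = 2*(r*s)*(v*v) /\ b = 2*u*v).
Proof.
prelude2 a b u v E Hmin.
all: leaf u v E Hmin.
Qed.

End Class1.

Lemma NSQ p K' t n : prime p -> ~ (p | K') -> t <> 0 -> p * K' * (t * t) = n * n -> False.
Proof.
intros hp hK ht e. pose proof (prime_ge_2 p hp).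
apply (not_sq (p*K') t n p hp ht); auto.
- apply Z.divide_factor_l.
- intros h. apply hK. apply (Z.mul_divide_cancel_l _ _ p); [lia| auto].
Qed.

Lemma irr x y x' y' m p : prime p -> (p | m) -> ~ (p * p | m) -> 0 < m ->
  (IZR x + IZR y * sqrt (IZR m) = IZR x' + IZR y' * sqrt (IZR m))%R -> y = y' /\ x = x'.
Proof.
intros hp hpm hpp hm e.
assert (hS : (sqrt (IZR m) * sqrt (IZR m) = IZR m)%R) by (apply sqrt_sqrt; apply IZR_le; lia).
destruct (Z.eq_dec y y') as [->|hne].
- split; auto. apply eq_IZR. lra.
- exfalso.
  assert (e2 : (IZR (y - y') * sqrt (IZR m) = IZR (x' - x))%R) by (rewrite !minus_IZR; lra).
  assert (e3 : (IZR m * (IZR (y - y') * IZR (y - y')) = IZR (x' - x) * IZR (x' - x))%R).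
  { rewrite <- e2.
    replace (IZR (y - y') * sqrt (IZR m) * (IZR (y - y') * sqrt (IZR m)))%R
      with ((sqrt (IZR m) * sqrt (IZR m)) * (IZR (y - y') * IZR (y - y')))%R by ring.
    rewrite hS. reflexivity. }
  rewrite <- !mult_IZR in e3. apply eq_IZR in e3.
  apply (not_sq m (y - y') (x' - x) p hp); auto. lia.
Qed.

Section FU.
Variables (m p : Z).
Hypotheses (hp : prime p) (hpm : (p | m)) (hpp : ~ (p * p | m)) (hm : 1 < m)
  (hneg : forall a b, m * (b * b) - 1 * (a * a) = 1 -> False).

Lemma fu_props a b : fund_unit m (IZR a + IZR b * sqrt (IZR m))%R ->
  a * a - m * (b * b) = 1 /\ 1 < a /\ 0 < b /\ Hmin_prop m a.
Proof.
intros [[c [d [ec hcd]]] [hgt hmin]].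
set (S := sqrt (IZR m)) in *.
assert (hS : (S * S = IZR m)%R) by (apply sqrt_sqrt; apply IZR_le; lia).
assert (hS0 : (0 < S)%R) by (apply sqrt_lt_R0; apply IZR_lt; lia).
assert (e2 : (IZR (2*a) + IZR (2*b) * S = IZR c + IZR d * S)%R) by (rewrite !mult_IZR; lra).
destruct (irr _ _ _ _ m p hp hpm hpp ltac:(lia) e2) as [ed ec'].
assert (hn : a * a - m * (b * b) = 1).
{ destruct hcd as [h|h]; [lia|]. exfalso. apply (hneg a b). nia. }
set (eps := (IZR a + IZR b * S)%R) in *.
set (f := (IZR a - IZR b * S)%R).
assert (hef : (eps * f = 1)%R).
{ unfold eps, f. replace 1%R with (IZR (a * a - m * (b * b))) by (rewrite hn; reflexivity).
  rewrite minus_IZR, !mult_IZR, <- hS. ring. }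
assert (hf0 : (0 < f)%R) by nra.
assert (hf1 : (f < 1)%R) by nra.
assert (ha0 : 0 < a).
{ apply lt_IZR. assert (IZR a = (eps + f) / 2)%R by (unfold eps, f; field). lra. }
assert (hb0 : 0 < b).
{ apply lt_IZR. assert (IZR b * S = (eps - f) / 2)%R by (unfold eps, f; field).
  assert (0 < IZR b * S)%R by lra. nra. }
split; [exact hn|]. split; [nia|]. split; [exact hb0|].
intros u v hu hv huv hau.
set (eta := (IZR v + IZR u * S)%R).
assert (hu1 : (1 <= IZR u)%R) by (apply IZR_le; lia).
assert (hv1 : (1 <= IZR v)%R) by (apply IZR_le; lia).
assert (heta : (1 < eta)%R) by (unfold eta; nra).
assert (hunit : unit_OK m eta).
{ exists (2*v), (2*u). split.
  - unfold eta, S. rewrite !mult_IZR. field.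
  - left. nia. }
specialize (hmin eta hunit heta).
assert (hb : b = 2 * u * v).
{ assert (b * b = (2*u*v)*(2*u*v)).
  { apply (Z.mul_cancel_l _ _ m); [lia|]. nia. }
  nia. }
assert (eeps : eps = (eta * eta)%R).
{ unfold eps, eta. rewrite hb. replace a with (2*m*(u*u) + 1) by lia.
  rewrite !plus_IZR, !mult_IZR. rewrite <- hS.
  assert (IZR v * IZR v = 1 + IZR m * (IZR u * IZR u))%R.
  { rewrite <- !mult_IZR. rewrite <- plus_IZR. f_equal. lia. }
  rewrite <- hS in H. nra. }
nra.
Qed.
End FU.

Lemma sqrt_id (k a b M A B al be : Z) : 0 <= A -> 0 <= B -> 0 <= al -> 0 <= be -> M = A * B ->
  k * a = al * al * A + be * be * B -> k * b = 2 * al * be ->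
  sqrt (IZR k * (IZR a + IZR b * sqrt (IZR M))) = (IZR al * sqrt (IZR A) + IZR be * sqrt (IZR B))%R.
Proof.
intros hA hB hal hbe hM e1 e2.
assert (sA : (sqrt (IZR A) * sqrt (IZR A) = IZR A)%R) by (apply sqrt_sqrt; apply IZR_le; lia).
assert (sB : (sqrt (IZR B) * sqrt (IZR B) = IZR B)%R) by (apply sqrt_sqrt; apply IZR_le; lia).
assert (sM : sqrt (IZR M) = (sqrt (IZR A) * sqrt (IZR B))%R).
{ rewrite hM, mult_IZR. apply sqrt_mult; apply IZR_le; lia. }
assert (hpos : (0 <= IZR al * sqrt (IZR A) + IZR be * sqrt (IZR B))%R).
{ assert (0 <= IZR al)%R by (apply IZR_le; lia). assert (0 <= IZR be)%R by (apply IZR_le; lia).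
  pose proof (sqrt_pos (IZR A)). pose proof (sqrt_pos (IZR B)). nra. }
rewrite <- (sqrt_square _ hpos). f_equal.
rewrite sM.
replace (IZR k * (IZR a + IZR b * (sqrt (IZR A) * sqrt (IZR B))))%R
  with (IZR (k * a) + IZR (k * b) * (sqrt (IZR A) * sqrt (IZR B)))%R by (rewrite !mult_IZR; ring).
rewrite e1, e2, !plus_IZR, !mult_IZR. rewrite <- sA at 1. rewrite <- sB at 1. ring.
Qed.

Lemma sqf p K' : prime p -> ~ (p | K') -> ~ (p * p | p * K').
Proof.
intros hp hK h. pose proof (prime_ge_2 p hp). apply hK.
apply (Z.mul_divide_cancel_l _ _ p); [lia| auto].
Qed.

Lemma d11 : delta 1 1 = 1. Proof. reflexivity. Qed.
Lemma d12 : delta 1 2 = 0. Proof. reflexivity. Qed.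
Lemma d21 : delta 2 1 = 0. Proof. reflexivity. Qed.
Lemma d22 : delta 2 2 = 1. Proof. reflexivity. Qed.

Ltac nsq p K' t :=
  let n := fresh "n" in let hn := fresh "hn" in
  intros [n hn]; exfalso; apply (NSQ p K' t n); [assumption | ndiv p | nia | nia].

Theorem lemma4p5 (nu rho q r s : Z) :
  (nu = 1 \/ nu = 2) -> (rho = 1 \/ rho = 2) -> rho <> nu ->
  prime q -> prime r -> prime s -> q <> r -> q <> s -> r <> s ->
  q mod 8 = 7 -> r mod 8 = 3 -> s mod 8 = 3 ->
  legendre q s = (-1) ^ delta nu 2 -> legendre q r = (-1) ^ delta nu 2 ->
  legendre s r = 1 ->
  (* Part 1 *)
  (forall a b : Z,
     fund_unit (nu * q * r * s) (IZR a + IZR b * sqrt (IZR (nu * q * r * s)))%R ->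
     exactly_one
       (is_square_N (2 ^ delta nu 1 * r * (a + (-1) ^ delta nu 1)))
       (is_square_N (2 ^ delta nu 2 * q * (a - 1)))
       (is_square_N (2 ^ delta nu 2 * s * (a + (-1) ^ delta nu 1))) /\
     exists b1 b2 : Z,
       (is_square_N (2 ^ delta nu 1 * r * (a + (-1) ^ delta nu 1)) ->
          sqrt (IZR nu * (IZR a + IZR b * sqrt (IZR (nu * q * r * s))))
            = (IZR b1 * sqrt (IZR r) + IZR b2 * sqrt (IZR (nu * q * s)))%R /\
          2 ^ delta nu 2 = (-1) ^ delta nu 1 * r * b1 ^ 2
                           + (-1) ^ delta nu 2 * nu * q * s * b2 ^ 2) /\
       (is_square_N (2 ^ delta nu 2 * q * (a - 1)) ->
          sqrt (2 * (IZR a + IZR b * sqrt (IZR (nu * q * r * s))))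
            = (IZR b1 * sqrt (IZR (nu * q)) + IZR b2 * sqrt (IZR (r * s)))%R /\
          2 = - 2 ^ delta nu 2 * q * b1 ^ 2 + r * s * b2 ^ 2) /\
       (is_square_N (2 ^ delta nu 2 * s * (a + (-1) ^ delta nu 1)) ->
          sqrt (2 * (IZR a + IZR b * sqrt (IZR (nu * q * r * s))))
            = (IZR b1 * sqrt (IZR (nu * s)) + IZR b2 * sqrt (IZR (q * r)))%R /\
          2 = (-1) ^ delta nu 1 * 2 ^ delta nu 2 * s * b1 ^ 2
              + (-1) ^ delta nu 2 * q * r * b2 ^ 2)) /\
  (* Part 2 *)
  (forall x y : Z,
     fund_unit (rho * q * r * s) (IZR x + IZR y * sqrt (IZR (rho * q * r * s)))%R ->
     is_square_N (2 ^ delta nu 2 * q * (x - 1)) /\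
     exists y1 y2 : Z,
       sqrt (IZR rho * (IZR x + IZR y * sqrt (IZR (rho * q * r * s))))
         = (IZR y1 * sqrt (IZR q) + IZR y2 * sqrt (IZR (rho * r * s)))%R /\
       rho = - q * y1 ^ 2 + rho * r * s * y2 ^ 2).
Proof.
intros Hnu Hrho Hne hq hr hs hqr hqs hrs q8 r8 s8 Lqs Lqr Lsr.
pose proof (prime_ge_2 q hq); pose proof (prime_ge_2 r hr); pose proof (prime_ge_2 s hs).
assert (q2 : 2 < q /\ 2 < r /\ 2 < s) by (repeat split; (assert (x : q <> 2 /\ r <> 2 /\ s <> 2) by (repeat split; intro; subst; discriminate)); lia).
destruct q2 as (q2 & r2 & s2).
assert (oq : q mod 2 = 1) by (apply oddp; auto; lia).
assert (or : r mod 2 = 1) by (apply oddp; auto; lia).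
assert (os : s mod 2 = 1) by (apply oddp; auto; lia).
pose proof prime_2 as h2.
assert (nqq : ~ (q * q | q * (r * s))) by (apply sqf; auto; ndiv q).
destruct Hnu as [-> | ->].
-
  assert (rho = 2) by lia. subst rho.
  rewrite d11, d12 in *. change ((-1)^1) with (-1) in *. change ((-1)^0) with 1 in *.
  change (2^1) with 2 in *. change (2^0) with 1 in *.
  assert (Xsq : chi s q = 1) by (apply NT.chi_leg1; auto).
  assert (Xrq : chi r q = 1) by (apply NT.chi_leg1; auto).
  assert (Xrs : chi r s = 1) by (apply NT.chi_leg1; auto).
  split.
  + intros a b Hfu.
    replace (1 * q * r * s) with (q * r * s) in Hfu by ring.
    destruct (fu_props (q*r*s) q hq ltac:(exists (r*s); ring) ltac:(replace (q*r*s) with (q*(r*s)) by ring; exact nqq) ltac:(nia)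
       ltac:(intros a0 b0 E; m8 E) a b Hfu) as (hn & ha & hb & Hmin).
    destruct (class1p q r s hq hr hs hqr hqs hrs q8 r8 s8 a b Xsq Xrq Xrs ha hb hn Hmin)
      as [(u & v & hu & hv & e1 & e2 & e3)|[(u & v & hu & hv & e1 & e2 & e3)|(u & v & hu & hv & e1 & e2 & e3)]].
    * split.
      -- left. split; [exists (2*r*u); nia | split; [nsq q (2*r) u | nsq s (2*r) u]].
      -- exists u, v. rewrite !Z.pow_2_r. split; [|split].
         ++ intros _. split.
            ** apply (sqrt_id 1 a b (1*q*r*s) r (1*q*s) u v); lia.
            ** lia.
         ++ nsq q (2*r) u.
         ++ nsq s (2*r) u.
    * split.
      -- right; left. split; [nsq q (2*r) u | split; [exists (q*u); nia | nsq q s u]].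
      -- exists u, v. rewrite !Z.pow_2_r. split; [|split].
         ++ nsq q (2*r) u.
         ++ intros _. split.
            ** apply (sqrt_id 2 a b (1*q*r*s) (1*q) (r*s) u v); lia.
            ** lia.
         ++ nsq q s u.
    * split.
      -- right; right. split; [nsq s (2*r) u | split; [nsq s q u | exists (s*u); nia]].
      -- exists u, v. rewrite !Z.pow_2_r. split; [|split].
         ++ nsq s (2*r) u.
         ++ nsq s q u.
         ++ intros _. split.
            ** apply (sqrt_id 2 a b (1*q*r*s) (1*s) (q*r) u v); lia.
            ** lia.
  + intros x y Hfu.
    destruct (fu_props (2*q*r*s) q hq ltac:(exists (2*r*s); ring)
       ltac:(replace (2*q*r*s) with (q*(2*(r*s))) by ring; apply sqf; auto; ndiv q) ltac:(nia)
       ltac:(intros a0 b0 E; m8 E) x y Hfu) as (hn & ha & hb & Hmin).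
    destruct (class2p q r s hq hr hs hqr hqs hrs q8 r8 s8 x y Xsq Xrq Xrs ha hb hn Hmin)
      as (u & v & hu & hv & e1 & e2 & e3).
    split; [exists (2*q*u); nia|].
    exists (2*u), v. rewrite !Z.pow_2_r. split.
    * apply (sqrt_id 2 x y (2*q*r*s) q (2*r*s) (2*u) v); lia.
    * lia.
-
  assert (rho = 1) by lia. subst rho.
  rewrite d21, d22 in *. change ((-1)^1) with (-1) in *. change ((-1)^0) with 1 in *.
  change (2^1) with 2 in *. change (2^0) with 1 in *.
  assert (Xsq : chi s q = -1) by (apply NT.chi_legm1; auto).
  assert (Xrq : chi r q = -1) by (apply NT.chi_legm1; auto).
  assert (Xrs : chi r s = 1) by (apply NT.chi_leg1; auto).
  split.
  + intros a b Hfu.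
    destruct (fu_props (2*q*r*s) q hq ltac:(exists (2*r*s); ring)
       ltac:(replace (2*q*r*s) with (q*(2*(r*s))) by ring; apply sqf; auto; ndiv q) ltac:(nia)
       ltac:(intros a0 b0 E; m8 E) a b Hfu) as (hn & ha & hb & Hmin).
    destruct (class2m q r s hq hr hs hqr hqs hrs q8 r8 s8 a b Xsq Xrq Xrs ha hb hn Hmin)
      as [(u & v & hu & hv & e1 & e2 & e3)|[(u & v & hu & hv & e1 & e2 & e3)|(u & v & hu & hv & e1 & e2 & e3)]].
    * split.
      -- right; left. split; [nsq s 1 (2*r*v) | split; [exists (2*q*u); nia | nsq r 2 (2*s*v)]].
      -- exists u, (2*v). rewrite !Z.pow_2_r. split; [|split].
         ++ nsq s 1 (2*r*v).
         ++ intros _. split.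
            ** apply (sqrt_id 2 a b (2*q*r*s) (2*q) (r*s) u (2*v)); lia.
            ** lia.
         ++ nsq r 2 (2*s*v).
    * split.
      -- left. split; [exists (2*r*v); nia | split; [nsq s 1 (2*q*u) | nsq r (2*s) (2*v)]].
      -- exists (2*v), u. rewrite !Z.pow_2_r. split; [|split].
         ++ intros _. split.
            ** apply (sqrt_id 2 a b (2*q*r*s) r (2*q*s) (2*v) u); lia.
            ** lia.
         ++ nsq s 1 (2*q*u).
         ++ nsq r (2*s) (2*v).
    * split.
      -- right; right. split; [nsq r (2*s) v | split; [nsq r 2 (2*q*u) | exists (2*s*v); nia]].
      -- exists v, (2*u). rewrite !Z.pow_2_r. split; [|split].
         ++ nsq r (2*s) v.
         ++ nsq r 2 (2*q*u).
         ++ intros _. split.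
            ** apply (sqrt_id 2 a b (2*q*r*s) (2*s) (q*r) v (2*u)); lia.
            ** lia.
  + intros x y Hfu.
    replace (1 * q * r * s) with (q * r * s) in Hfu by ring.
    destruct (fu_props (q*r*s) q hq ltac:(exists (r*s); ring) ltac:(replace (q*r*s) with (q*(r*s)) by ring; exact nqq) ltac:(nia)
       ltac:(intros a0 b0 E; m8 E) x y Hfu) as (hn & ha & hb & Hmin).
    destruct (class1m q r s hq hr hs hqr hqs hrs q8 r8 s8 x y Xsq Xrq Xrs ha hb hn Hmin)
      as (u & v & hu & hv & e1 & e2 & e3).
    split; [exists (2*q*u); nia|].
    exists u, v. rewrite !Z.pow_2_r. split.
    * apply (sqrt_id 1 x y (1*q*r*s) q (1*r*s) u v); lia.
    * lia.
Qed.
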